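(* Let $m\ge 1$ and let $M \subseteq \{1,2,\dots,m\}$ satisfy \[ |M\cap\{1,\dots,k\}| > \tfrac{k}{2} \quad\text{and}\quad |M\cap\{m-k+1,\dots,m\}| > \tfrac{k}{2} \] for every integer $0<k\le m$. Then $M+M=\{2,3,\dots,2m\}$.
   Context: For a finite set $S$ of integers, $S+S=\{s_1+s_2 : s_1,s_2\in S\}$. *)

(* Defs.v *)
From mathcomp Require Import all_boot.
Set Implicit Arguments. Unset Strict Implicit. Unset Printing Implicit Defensive.

Definition sumset (n : nat) (S : {set 'I_n}) : pred nat :=
  fun s => [exists x in S, exists y in S, (x : nat) + y == s].

(* Main.v *)
Require Import Defs.
From mathcomp Require Import all_boot.
From mathcomp Require Import zify.

Lemma interval_card n a b : #|[set x : 'I_n.+1 | a <= x <= b]| <= b.+1 - a.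
Proof.
pose g (j : 'I_(b.+1 - a)) : 'I_n.+1 := inord (a + j).
apply: (leq_trans _ (_ : #|g @: setT| <= _)); last first.
  by rewrite (leq_trans (leq_imset_card _ _)) // cardsT card_ord.
apply: subset_leq_card; apply/subsetP => x; rewrite inE => /andP[h1 h2].
have hj : x - a < b.+1 - a by lia.
apply/imsetP; exists (Ordinal hj); first by rewrite inE.
move: (ltn_ord x) => hx; apply: val_inj; rewrite /g /= inordK; lia.
Qed.

Lemma pairs n (A : {set 'I_n.+1}) a b :
  (forall x, x \in A -> a <= x <= b) -> b < n.+1 -> b.+1 - a < 2 * #|A| ->
  exists2 x, x \in A & exists2 y, y \in A & (x : nat) + y = a + b.
Proof.
move=> HA hb hk.
pose f (x : 'I_n.+1) : 'I_n.+1 := inord (a + b - x).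
have fv : forall x, x \in A -> (f x : nat) = a + b - x.
  move=> x /HA ?; rewrite /f inordK //; lia.
case: (boolP [exists x in A, f x \in A]).
  case/exists_inP => x xA fxA; exists x => //; exists (f x) => //.
  rewrite fv //; have := HA _ xA; lia.
rewrite negb_exists_in => /forall_inP Hn.
have dis : [disjoint A & f @: A].
  rewrite -setI_eq0; apply/eqP/setP => z; rewrite !inE.
  apply/negbTE/negP => /andP[zA /imsetP[x xA ez]]; subst z.
  by move: (Hn x xA); rewrite zA.
have cf : #|f @: A| = #|A|.
  apply: card_in_imset => x y xA yA e.
  have := congr1 val e; rewrite /= (fv _ xA) (fv _ yA) => h.
  have := HA _ xA; have := HA _ yA; move=> ? ?; apply: val_inj => /=. lia.
have sub : A :|: f @: A \subset [set x : 'I_n.+1 | a <= x <= b].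
  apply/subsetP => z; rewrite !inE => /orP[/HA //|/imsetP[x xA ->]].
  rewrite fv //; have := HA _ xA; lia.
have := subset_leq_card sub; rewrite cardsU.
move: dis; rewrite -setI_eq0 => /eqP ->; rewrite cards0 subn0 cf.
move=> h; move: hk; by rewrite ltnNge mul2n -addnn (leq_trans h (interval_card n a b)).
Qed.

Theorem lemma1 (m : nat) (M : {set 'I_m.+1}) :
  1 <= m ->
  (forall x : 'I_m.+1, x \in M -> 1 <= x) ->
  (forall k : nat, 0 < k <= m ->
     k < 2 * #|[set x in M | (x : nat) <= k]| /\
     k < 2 * #|[set x in M | m - k + 1 <= x]|) ->
  forall s : nat, (s \in sumset M) = (2 <= s <= 2 * m).
Proof.
move=> hm H1 Hk s.
apply/idP/idP.
  rewrite /sumset unfold_in => /exists_inP[x xM /exists_inP[y yM /eqP <-]].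
  have := H1 _ xM; have := H1 _ yM; have := ltn_ord x; have := ltn_ord y; lia.
move=> /andP[s1 s2].
have [le|gt] := leqP s m.+1.
  have [hA _] := Hk s.-1 ltac:(lia).
  have [x xA [y yA e]] := @pairs m [set x in M | (x : nat) <= s.-1] 1 s.-1 ltac:(move=> x; rewrite inE => /andP[/H1 ? ?]; lia)
     ltac:(lia) ltac:(lia).
  move: xA yA; rewrite !inE => /andP[xM _] /andP[yM _].
  rewrite /sumset unfold_in; apply/exists_inP; exists x => //.
  apply/exists_inP; exists y => //; apply/eqP; lia.
have [_ hB] := Hk (2 * m + 1 - s) ltac:(lia).
have [x xA [y yA e]] := @pairs m [set x in M | m - (2 * m + 1 - s) + 1 <= x] (m - (2 * m + 1 - s) + 1) m
   ltac:(move=> x; rewrite inE => /andP[_ ?]; have := ltn_ord x; lia)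
   ltac:(lia) ltac:(lia).
move: xA yA; rewrite !inE => /andP[xM _] /andP[yM _].
rewrite /sumset unfold_in; apply/exists_inP; exists x => //.
apply/exists_inP; exists y => //; apply/eqP; lia.
Qed.
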